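(* Let $1<p,q<\infty$, and let $\mu,\nu,K$ be locally integrable functions on $\mathbb{R}^n$ such that, for some $\alpha\ge0$, $\beta\ge0$, $\rho\ge0$ and $C_0>0$, for all $\lambda\ge1$ and $t>0$, $$\mu^*(\lambda t)\le C_0\frac{\mu^*(t)}{\lambda^\alpha},\qquad \nu^*(\lambda t)\le C_0\frac{\nu^*(t)}{\lambda^\beta},\qquad K^*(\lambda t)\le C_0\frac{K^*(t)}{\lambda^\rho},$$ and $$\rho+\alpha+\tfrac1p\ge1,\qquad \rho+\beta+\tfrac1{q'}\ge1 .$$ If $$\mathcal{D}:=\sup_{t>0}\frac1{t^{2+1/p-1/q}}\int_0^t\mu^*(s)\,ds\int_0^t\nu^*(s)\,ds\int_0^tK^*(s)\,ds<\infty,$$ then $$\sup_{\xi>0,\ \eta>0}\frac1{\eta^{1/q'}}\frac1{\xi^{1/p}}\int_0^\eta\nu^*(t)\int_0^\xi\mu^*(s)\,K^{**}(\max(s,t))\,ds\,dt\le C\mathcal{D},$$ where $C$ depends only on $p,q,\alpha,\beta,\rho$ (and $C_0$).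
   Context: $\psi^*$ is the decreasing rearrangement of $\psi$ and $\psi^{**}(t)=\frac1t\int_0^t\psi^*(s)\,ds$. $q'=q/(q-1)$. *)

(* Defs.v *)
From HB Require Import structures.
From mathcomp Require Import all_boot all_order all_algebra.
From mathcomp Require Import all_classical all_reals all_analysis.
Set Implicit Arguments. Unset Strict Implicit. Unset Printing Implicit Defensive.
Import Order.TTheory GRing.Theory Num.Theory.
Import numFieldNormedType.Exports.
Local Open Scope classical_set_scope.
Local Open Scope ring_scope.

(** R^n is represented by [n.-tuple R], with the product (Borel) sigma-algebra
    provided by mathcomp-analysis (generated by the coordinate maps). *)

(** Lebesgue measure on R^n, defined as the iterated integral of Lebesgue
    measure on R (Tonelli): lebn 0 is the Dirac mass on the unique point of
    R^0, and lebn (n+1) A = \int_R lebn n (section of A at x) dx. *)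
Fixpoint lebn {R : realType} (n : nat) : set (n.-tuple R) -> \bar R :=
  match n return set (n.-tuple R) -> \bar R with
  | 0 => fun A => if `[< A [tuple] >] then 1%E else 0%E
  | n'.+1 => fun A =>
      (\int[@lebesgue_measure R]_x lebn [set t | A (cons_tuple x t)])%E
  end.

(** Locally integrable on R^n: measurable and integrable on every cube
    [-r,r]^n (every compact set is contained in such a cube). *)
Definition locally_integrable_n {R : realType} (n : nat)
    (f : n.-tuple R -> R) : Prop :=
  measurable_fun setT f /\
  forall r : R, 0 < r ->
    (\int[@lebn R n]_(x in [set x : n.-tuple R | forall i, (`|tnth x i| <= r)%R])
        `|f x|%:E < +oo)%E.

Definition distrib_fun {R : realType} (n : nat) (f : n.-tuple R -> R) (s : R)
  : \bar R := lebn [set x | s < `|f x|].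

Definition rearr {R : realType} (n : nat) (f : n.-tuple R -> R) (t : R)
  : \bar R :=
  ereal_inf [set s%:E | s in [set s : R | 0 <= s /\ (distrib_fun f s <= t%:E)%E]].

Definition rearr_int {R : realType} (n : nat) (f : n.-tuple R -> R) (t : R)
  : \bar R :=
  (\int[@lebesgue_measure R]_(s in `]0%R, t]) rearr f s)%E.

Definition rearr2 {R : realType} (n : nat) (f : n.-tuple R -> R) (t : R)
  : \bar R := ((t^-1)%:E * rearr_int f t)%E.

Definition conj_exp {R : realType} (q : R) : R := q / (q - 1).

(* Main.v *)
Require Import Defs.
From HB Require Import structures.
From mathcomp Require Import all_boot all_order all_algebra.
From mathcomp Require Import all_classical all_reals all_analysis.
From mathcomp Require Import measurable_realfun.
From mathcomp.algebra_tactics Require Import ring lra.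
Import Order.TTheory GRing.Theory Num.Theory.
Import numFieldNormedType.Exports.
Local Open Scope classical_set_scope.
Local Open Scope ring_scope.
Set Implicit Arguments. Unset Strict Implicit.

Section S.
Context {R : realType}.
Local Notation mu := (@lebesgue_measure R).
Lemma powR_int_oc (c x y : R) : 0 < c -> 0 < x -> x < y ->
  (\int[mu]_(u in `]x, y]) (u `^ (c - 1))%:E = ((y `^ c - x `^ c) / c)%:E)%E.
Proof.
move=> c0 x0 xy.
rewrite integral_itv_obnd_cbnd; last first.
  by apply/measurable_EFinP; apply: measurable_funTS; exact: measurable_powR.
have dF : forall u : R, 0 < u -> is_derive u (1:R) (fun u => c^-1 * u `^ c) (c^-1 * (c * u `^ (c - 1))).
  by move=> u u0; exact: (is_deriveZ c^-1 (is_derive1_powR c u0)).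
rewrite (@continuous_FTC2 _ _ (fun u => c^-1 * u `^ c)) //.
- by rewrite -EFinB -mulrBr mulrC.
- apply: continuous_in_subspaceT => u; rewrite inE /= in_itv /= => /andP[xu _].
  apply/differentiable_continuous; rewrite -derivable1_diffP.
  by apply: derivable_powR; rewrite in_itv /= andbT (lt_le_trans x0).
- have cF : forall u : R, 0 < u -> {for u, continuous (fun u : R => c^-1 * u `^ c)}.
    move=> u u0; apply/differentiable_continuous; rewrite -derivable1_diffP.
    by have [] := dF u u0.
  split.
  + by move=> u; rewrite in_itv /= => /andP[xu _]; have [] := dF u (lt_trans x0 xu).
  + by apply: cvg_at_right_filter; apply: cF.
  + by apply: cvg_at_left_filter; apply: cF; exact: lt_trans xy.
- move=> u; rewrite in_itv /= => /andP[xu _].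
  rewrite derive1E (@derive_val _ _ _ _ _ _ _ (dF u _)); last exact: lt_trans xu.
  by rewrite mulrA mulVf ?mul1r // gt_eqF.
Qed.

Lemma powR_int_0c (c y : R) : 0 < c -> 0 < y ->
  (\int[mu]_(u in `]0%R, y]) (u `^ (c - 1))%:E <= (y `^ c / c)%:E)%E.
Proof.
move=> c0 y0.
pose F := fun n : nat => `]y / n.+2%:R, y]%classic.
have FU : \bigcup_n F n = `]0%R, y]%classic.
  apply/seteqP; split => u.
    move=> [n _]; rewrite /F /= !in_itv /= => /andP[h ->]; rewrite andbT.
    by apply: le_lt_trans h; rewrite divr_ge0 // ltW.
  rewrite /= in_itv /= => /andP[u0 uy].
  have hn := archi_boundP (ltW (divr_gt0 y0 u0)).
  exists (Num.bound (y / u)) => //; rewrite /F /= in_itv /= uy andbT.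
  rewrite ltr_pdivrMr ?ltr0Sn // mulrC -(@ltr_pdivrMr _ u) //.
  by apply: (lt_le_trans hn); rewrite ler_nat (leq_trans (leqnSn _) (leqnSn _)).
have ndF : nondecreasing_seq F.
  move=> m n mn; apply/subsetPset => u; rewrite /F /= !in_itv /= => /andP[h ->].
  rewrite andbT; apply: le_lt_trans h; apply: ler_pM => //.
    by rewrite ltW.
  by rewrite lef_pV2 ?posrE ?ltr0Sn // ler_nat ltnS.
have mf : forall n, measurable_fun (F n) (fun u : R => (u `^ (c - 1))%:E).
  by move=> n; apply/measurable_EFinP; apply: measurable_funTS; exact: measurable_powR.
have hc : (\int[mu]_(x in F i) (x `^ (c-1))%:E @[i --> \oo] -->
     \int[mu]_(x in \bigcup_i F i) (x `^ (c-1))%:E)%E.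
  apply: ge0_nondecreasing_set_cvg_integral.
  - exact: ndF.
  - by move=> i; exact: measurable_itv.
  - exact: mf.
  - by move=> i x _; rewrite lee_fin powR_ge0.
rewrite -FU -(cvg_lim _ hc) //; apply: lime_le; first by apply/cvg_ex; eexists; exact: hc.
apply: nearW => n; rewrite powR_int_oc //; last first.
- rewrite ltr_pdivrMr ?ltr0Sn // ltr_pMr // ltr1n //.
- by rewrite divr_gt0 // ltr0Sn.
rewrite lee_fin ler_pM2r ?invr_gt0 // lerBlDr lerDl powR_ge0 //.
Qed.
Lemma ni_emeas (D : set R) (h : R -> \bar R) : is_interval D ->
  (forall x y, D x -> D y -> x <= y -> (h y <= h x)%E) -> measurable_fun D h.
Proof.
move=> iD hni mD.
apply: (measurability _ (ErealGenOInfty.measurableE R)) => //.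
move=> /= _ [_ [r ->] <-].
apply: is_interval_measurable.
move=> s t [Ds hs] [Dt ht] u /andP[su ut].
have Du : D u by apply: (iD s t Ds Dt); rewrite su ut.
split => //; move: ht; rewrite /= !in_itv /= !andbT => ht.
by apply: lt_le_trans ht _; apply: hni.
Qed.

Lemma itv_oc_interval (x y : R) : is_interval `]x, y]%classic.
Proof.
move=> s t; rewrite /= !in_itv /= => /andP[xs _] /andP[_ ty] u /andP[su ut].
by rewrite /= in_itv /= (lt_le_trans xs su) (le_trans ut ty).
Qed.

Record nni (h : R -> \bar R) := NNI {
  nni_ge0 : forall x, (0 <= h x)%E;
  nni_ni : forall x y, x <= y -> (h y <= h x)%E }.
Arguments nni_ge0 {h}.
Arguments nni_ni {h}.

Definition Iint (h : R -> \bar R) (x : R) := (\int[mu]_(s in `]0%R, x]) h s)%E.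
Definition kk h x := ((x^-1)%:E * Iint h x)%E.

Lemma nni_measT h : nni h -> measurable_fun setT h.
Proof. by move=> [_ hn]; apply: ni_emeas => // x y _ _; exact: hn. Qed.

Lemma nni_meas h (D : set R) : nni h -> measurable_fun D h.
Proof. by move=> hh; apply: measurable_funTS; exact: nni_measT. Qed.

Lemma Iint_ge0 h x : nni h -> (0 <= Iint h x)%E.
Proof. by move=> [h0 _]; apply: integral_ge0 => s _. Qed.

Lemma lowerI h t : nni h -> 0 < t -> (t%:E * h t <= Iint h t)%E.
Proof.
move=> hh t0; rewrite /Iint.
have -> : (t%:E * h t = \int[mu]_(s in `]0%R, t]) (cst (h t)) s)%E.
  rewrite integral_cst // muleC; congr (_ * _)%E.
  have := lebesgue_measure_itv `]0%R, t]; by rewrite /= lte_fin t0 oppr0 adde0 => ->.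
apply: ge0_le_integral => //.
- by move=> s _; exact: (nni_ge0 hh t).
- exact: nni_meas.
- by move=> s; rewrite /= in_itv /= => /andP[_ st]; apply: (nni_ni hh).
Qed.

Lemma lowerI' h t : nni h -> 0 < t -> (h t <= kk h t)%E.
Proof.
move=> hh t0; rewrite /kk.
have -> : h t = ((t^-1)%:E * (t%:E * h t))%E.
  by rewrite muleA -EFinM mulVf ?gt_eqF // mul1e.
by apply: lee_wpmul2l; [rewrite lee_fin invr_ge0 ltW | exact: lowerI].
Qed.

Lemma Isplit h x y : nni h -> 0 <= x -> x <= y ->
  Iint h y = (Iint h x + \int[mu]_(s in `]x, y]) h s)%E.
Proof.
move=> hh x0 xy; rewrite /Iint.
rewrite (@itv_bndbnd_setU _ _ (BRight 0) (BRight x) (BRight y)) ?bnd_simp //.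
apply: ge0_integral_setU => //.
- exact: nni_meas.
- by move=> s _; apply: (nni_ge0 hh).
- rewrite disj_set2E; apply/eqP/seteqP; split => // s [] /=.
  rewrite !in_itv /= => /andP[_ sx] /andP[xs _].
  by move: (lt_le_trans xs sx); rewrite ltxx.
Qed.

Lemma int_oc_le_cst h x y : nni h -> x <= y ->
  (\int[mu]_(s in `]x, y]) h s <= (y - x)%:E * h x)%E.
Proof.
move=> hh xy.
have -> : ((y - x)%:E * h x = \int[mu]_(s in `]x, y]) (cst (h x)) s)%E.
  rewrite integral_cst // muleC; congr (_ * _)%E.
  have := lebesgue_measure_itv `]x, y]; rewrite /= lte_fin => ->.
  case: ltP => //; rewrite leNgt => /negP; move: xy; rewrite le_eqVlt => /predU1P[->|//].
  by rewrite subrr.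
apply: ge0_le_integral => //.
- by move=> s _; exact: (nni_ge0 hh s).
- exact: nni_meas.
- by move=> s; rewrite /= in_itv /= => /andP[xs _]; apply: (nni_ni hh); rewrite ltW.
Qed.

Lemma kk_ni h x y : nni h -> 0 < x -> x <= y -> (kk h y <= kk h x)%E.
Proof.
move=> hh x0 xy; have y0 : 0 < y := lt_le_trans x0 xy.
have I0 := Iint_ge0 x hh.
have H1 : (Iint h y <= ((y / x)%:E * Iint h x))%E.
  rewrite (Isplit hh (ltW x0) xy).
  apply: le_trans (leeD (lexx _) (int_oc_le_cst hh xy)) _.
  have yx0 : (0 <= (y - x)%:E)%E by rewrite lee_fin subr_ge0.
  apply: le_trans (leeD (lexx _) (lee_wpmul2l yx0 (lowerI' hh x0))) _.
  rewrite /kk muleA -EFinM.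
  have c0 : (0 <= ((y - x) * x^-1)%:E)%E.
    by rewrite lee_fin mulr_ge0 // ?invr_ge0 ?subr_ge0 // ltW.
  rewrite -{1}(mul1e (Iint h x)) -ge0_muleDl //.
  rewrite -EFinD; apply: lee_wpmul2r => //; rewrite lee_fin le_eqVlt; apply/orP; left; apply/eqP.
  by field; rewrite gt_eqF.
rewrite /kk.
apply: le_trans (lee_wpmul2l _ H1) _; first by rewrite lee_fin invr_ge0 ltW.
by rewrite muleA -EFinM mulrA mulVf ?gt_eqF // mul1r.
Qed.

Lemma pwE (x r : R) : 0 < x -> x `^ r = expR (r * ln x).
Proof. by move=> x0; rewrite /powR gt_eqF. Qed.

Definition decay (h : R -> \bar R) (C0 al : R) := forall lam t : R, 1 <= lam -> 0 < t ->
  (h (lam * t)%R <= (C0 / lam `^ al)%:E * h t)%E.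

Lemma decay_pw h C0 al ga t s : nni h -> decay h C0 al -> 0 < C0 -> 0 <= ga -> ga <= al ->
  0 < t -> t <= s -> (h s <= (C0 * (t `^ ga * s `^ (- ga)))%:E * h t)%E.
Proof.
move=> hh dh C00 ga0 gal t0 ts; have s0 : 0 < s := lt_le_trans t0 ts.
have st1 : 1 <= s / t by rewrite ler_pdivlMr // mul1r.
have := dh (s / t) t st1 t0; rewrite divfK ?gt_eqF // => /le_trans; apply.
apply: lee_wpmul2r; first exact: (nni_ge0 hh).
rewrite lee_fin !pwE ?divr_gt0 // -expRD -expRN ler_pM2l // ler_expR.
rewrite ln_div ?posrE //.
have : ln t <= ln s by rewrite ler_ln ?posrE.
nra.
Qed.

Lemma mpow c : measurable_fun setT (fun u : R => (u `^ c)%:E).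
Proof. by apply/measurable_EFinP; exact: measurable_powR. Qed.

Lemma R1 (t s sg : R) : 0 < t -> t <= s -> 0 <= sg -> sg <= 1 ->
  t <= t `^ sg * s `^ (1 - sg).
Proof.
move=> t0 ts sg0 sg1; have s0 : 0 < s := lt_le_trans t0 ts.
rewrite !pwE // -expRD -{1}(lnK (x:=t)) ?posrE // ler_expR.
have : ln t <= ln s by rewrite ler_ln ?posrE.
nra.
Qed.

Lemma kk_decay k C0 rho sg t s : nni k -> decay k C0 rho -> 0 < C0 -> 0 <= sg -> sg < 1 ->
  sg <= rho -> 0 < t -> t <= s ->
  (kk k s <= ((1 + C0 / (1 - sg)) * (t `^ sg * s `^ (- sg)))%:E * kk k t)%E.
Proof.
move=> hk dk C00 sg0 sg1 sgr t0 ts; have s0 : 0 < s := lt_le_trans t0 ts.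
have sg1' : 0 < 1 - sg by rewrite subr_gt0.
pose K := ((C0 * t `^ sg)%:E * k t)%E.
have K0 : (0 <= K)%E by rewrite /K mule_ge0 ?(nni_ge0 hk) // lee_fin mulr_ge0 ?powR_ge0 // ltW.
have kk0 : (0 <= kk k t)%E by rewrite /kk mule_ge0 ?Iint_ge0 // lee_fin invr_ge0 ltW.
have stepA : (Iint k s <= Iint k t + K * (s `^ (1 - sg) / (1 - sg))%:E)%E.
  rewrite (Isplit hk (ltW t0) ts); apply: leeD => //.
  apply: (@le_trans _ _ (\int[mu]_(u in `]t, s]) (K * (u `^ ((1 - sg) - 1))%:E))%E).
    apply: ge0_le_integral => //.
    - by move=> u _; exact: (nni_ge0 hk u).
    - exact: nni_meas.
    - by apply: measurable_funeM; apply: measurable_funTS; exact: mpow.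
    move=> u; rewrite /= in_itv /= => /andP[tu us].
    apply: le_trans (decay_pw hk dk C00 sg0 sgr t0 (ltW tu)) _.
    rewrite /K muleAC -EFinM mulrA; apply: lee_wpmul2r; first exact: (nni_ge0 hk).
    by rewrite lee_fin (_ : 1 - sg - 1 = - sg) //; ring.
  rewrite ge0_integralZl //; last by move=> u _; rewrite lee_fin powR_ge0.
    apply: lee_wpmul2l => //.
    apply: le_trans (powR_int_0c sg1' s0).
    apply: ge0_subset_integral => //.
    - by apply: measurable_funTS; exact: mpow.
    - by move=> u _; rewrite lee_fin powR_ge0.
    - by move=> u; rewrite /= !in_itv /= => /andP[tu ->]; rewrite (lt_trans t0 tu).
  by apply: measurable_funTS; exact: mpow.
have It : Iint k t = (t%:E * kk k t)%E.
  by rewrite /kk muleA -EFinM mulfV ?gt_eqF // mul1e.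
have stepB : (Iint k s <= ((1 + C0 / (1 - sg)) * (t `^ sg * s `^ (1 - sg)))%:E * kk k t)%E.
  apply: le_trans stepA _; rewrite It.
  have -> : (K * (s `^ (1 - sg) / (1 - sg))%:E = (C0 * t `^ sg)%:E * k t * (s `^ (1 - sg) / (1 - sg))%:E)%E by [].
  rewrite muleAC -EFinM.
  apply: le_trans (leeD (lexx _) (lee_wpmul2l _ (lowerI' hk t0))) _.
    by rewrite lee_fin !mulr_ge0 ?invr_ge0 ?powR_ge0 // ltW.
  rewrite -ge0_muleDl ?lee_fin ?mulr_ge0 ?invr_ge0 ?powR_ge0 ?(ltW t0) ?(ltW C00) ?(ltW sg1') //.
  rewrite -EFinD; apply: lee_wpmul2r => //; rewrite lee_fin.
  have := R1 t0 ts sg0 (ltW sg1).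
  have : 0 <= t `^ sg * s `^ (1 - sg) by rewrite mulr_ge0 ?powR_ge0.
  have : 0 <= C0 / (1 - sg) by rewrite divr_ge0 // ltW.
  set P := t `^ sg * s `^ (1 - sg).
  rewrite (_ : C0 * t `^ sg * (s `^ (1 - sg) / (1 - sg)) = C0 / (1 - sg) * P); last by rewrite /P; ring.
  nra.
rewrite /kk -/(kk k t).
apply: le_trans (lee_wpmul2l _ stepB) _; first by rewrite lee_fin invr_ge0 ltW.
rewrite muleA -EFinM; apply: lee_wpmul2r => //; rewrite lee_fin le_eqVlt; apply/orP; left; apply/eqP.
rewrite !pwE // mulrCA; congr (_ * _).
rewrite mulrCA; congr (_ * _).
have -> : s^-1 = expR (- ln s) by rewrite expRN lnK // posrE.
rewrite -expRD; congr expR; ring.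
Qed.

Lemma kk_ge0 h x : nni h -> 0 < x -> (0 <= kk h x)%E.
Proof. by move=> hh x0; rewrite /kk mule_ge0 ?Iint_ge0 // lee_fin invr_ge0 ltW. Qed.

Lemma max_pos (s t : R) : 0 < t -> 0 < Num.max s t.
Proof. by move=> t0; rewrite lt_max t0 orbT. Qed.

Lemma max_mono (s s' t : R) : s <= s' -> Num.max s t <= Num.max s' t.
Proof. by move=> ss'; rewrite ge_max !le_max ss' lexx orbT. Qed.

Lemma max_mono2 (s t t' : R) : t <= t' -> Num.max s t <= Num.max s t'.
Proof. by move=> tt'; rewrite ge_max !le_max lexx tt' orbT. Qed.

Lemma phi_ni f k t : nni f -> nni k -> 0 < t -> forall s s' : R, s <= s' ->
  (f s' * kk k (Num.max s' t) <= f s * kk k (Num.max s t))%E.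
Proof.
move=> hf hk t0 s s' ss'; apply: lee_pmul.
- exact: (nni_ge0 hf).
- exact: kk_ge0 (max_pos _ t0).
- exact: (nni_ni hf).
- exact: kk_ni (max_pos _ t0) (max_mono _ ss').
Qed.

Lemma phi_meas f k t (D : set R) : nni f -> nni k -> 0 < t ->
  measurable_fun D (fun s => f s * kk k (Num.max s t))%E.
Proof.
move=> hf hk t0; apply: measurable_funTS; apply: ni_emeas => //.
by move=> x y _ _ xy; exact: phi_ni.
Qed.

Definition J f k (xi t : R) := (\int[mu]_(s in `]0%R, xi]) (f s * kk k (Num.max s t)))%E.

Lemma J_ge0 f k xi t : nni f -> nni k -> 0 < t -> (0 <= J f k xi t)%E.
Proof.
move=> hf hk t0; apply: integral_ge0 => s _.
by rewrite mule_ge0 ?(nni_ge0 hf) ?kk_ge0 ?max_pos.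
Qed.

Lemma J_ni f k xi t t' : nni f -> nni k -> 0 < t -> t <= t' -> (J f k xi t' <= J f k xi t)%E.
Proof.
move=> hf hk t0 tt'; have t'0 : 0 < t' := lt_le_trans t0 tt'.
apply: ge0_le_integral => //.
- by move=> s _; rewrite mule_ge0 ?(nni_ge0 hf) ?kk_ge0 ?max_pos.
- exact: phi_meas.
- exact: phi_meas.
move=> s _; apply: lee_wpmul2l; first exact: (nni_ge0 hf).
exact: kk_ni (max_pos _ t0) (max_mono2 _ tt').
Qed.

Lemma gJ_meas f g k (xi eta : R) : nni f -> nni g -> nni k ->
  measurable_fun `]0%R, eta] (fun t => g t * J f k xi t)%E.
Proof.
move=> hf hg hk; apply: ni_emeas; first exact: itv_oc_interval.
move=> x y; rewrite /= !in_itv /= => /andP[x0 _] _ xy.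
apply: lee_pmul.
- exact: (nni_ge0 hg).
- exact: J_ge0 (lt_le_trans x0 xy).
- exact: (nni_ni hg).
- exact: J_ni.
Qed.

Lemma chain (x y Y : \bar R) (a b : R) : 0 <= a ->
  (x <= a%:E * y)%E -> (y <= b%:E * Y)%E -> (x <= (a * b)%:E * Y)%E.
Proof.
move=> a0 xy yY; apply: le_trans xy _; rewrite EFinM -muleA.
by apply: lee_wpmul2l => //; rewrite lee_fin.
Qed.

Lemma prod3 (x y z X Y Z : \bar R) (a b c : R) :
  (0 <= x)%E -> (0 <= y)%E -> (0 <= z)%E ->
  (x <= a%:E * X)%E -> (y <= b%:E * Y)%E -> (z <= c%:E * Z)%E ->
  (x * y * z <= (a * b * c)%:E * (X * Y * Z))%E.
Proof.
move=> x0 y0 z0 hx hy hz.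
have -> : ((a * b * c)%:E * (X * Y * Z) = a%:E * X * (b%:E * Y) * (c%:E * Z))%E.
  by rewrite (muleACA a%:E) (muleACA (a%:E * b%:E)%E) !EFinM.
apply: lee_pmul => //; first exact: mule_ge0.
exact: lee_pmul.
Qed.

Lemma powRD' (x r s : R) : 0 < x -> x `^ (r + s) = x `^ r * x `^ s.
Proof. by move=> x0; rewrite powRD // (gt_eqF x0) implybT. Qed.

Definition sig (rho a : R) := Num.min rho (1 - a).
Definition C1 (C0 rho a : R) := 1 + C0 / (1 - sig rho a).

Lemma sig_props rho a al : 0 <= rho -> 0 < a -> a < 1 -> 0 <= al -> 1 <= rho + al + a ->
  [/\ 0 <= sig rho a, sig rho a < 1, sig rho a <= rho, 0 <= 1 - a - sig rho a &
      1 - a - sig rho a <= al].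
Proof.
move=> r0 a0 a1 al0 h; rewrite /sig minEle.
by case: (leP rho (1 - a)) => rl; split => //; lra.
Qed.

Lemma C1_ge0 C0 rho a : 0 < C0 -> sig rho a < 1 -> 0 <= C1 C0 rho a.
Proof.
move=> C00 s1; rewrite /C1 addr_ge0 // divr_ge0 ?ltW //.
by rewrite subr_gt0.
Qed.

Lemma case1 f g k C0 be rho a b D xi t :
  nni f -> nni g -> nni k -> decay g C0 be -> decay k C0 rho -> 0 < C0 ->
  0 <= be -> 0 <= rho -> 0 < b -> b < 1 -> 1 <= rho + be + b -> (0 <= D)%E ->
  (forall r, 0 < r -> (Iint f r * Iint g r * Iint k r <= (r `^ (1 + a + b))%:E * D)%E) ->
  0 < xi -> xi <= t ->
  (g t * J f k xi t <= (C0 * C1 C0 rho b * (xi `^ a * t `^ (b - 1)))%:E * D)%E.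
Proof.
move=> hf hg hk dg dk C00 be0 r0 b0 b1 hrb D0 Db xi0 xit.
have t0 : 0 < t := lt_le_trans xi0 xit.
have [s0 s1 sr gm0 gmb] := sig_props r0 b0 b1 be0 hrb.
have C10 : 0 <= C1 C0 rho b := C1_ge0 C00 s1.
set s := sig rho b in s0 s1 sr gm0 gmb C10 *.
set gm := 1 - b - s in gm0 gmb *.
have HJ : J f k xi t = (kk k t * Iint f xi)%E.
  rewrite /J /Iint -ge0_integralZl //; last 3 first.
  - exact: nni_meas.
  - by move=> u _; exact: (nni_ge0 hf).
  - exact: kk_ge0.
  apply: eq_integral => u; rewrite inE /= in_itv /= => /andP[_ uxi].
  by rewrite max_r ?(le_trans uxi xit) // muleC.
rewrite HJ muleA.
have hx : (g t <= ((C0 * (xi `^ gm * t `^ (- gm))) * xi^-1)%:E * Iint g xi)%E.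
  apply: chain (decay_pw hg dg C00 gm0 gmb xi0 xit) _.
    by rewrite mulr_ge0 ?mulr_ge0 ?powR_ge0 // ltW.
  exact: lowerI' hg xi0.
have hy : (kk k t <= ((C1 C0 rho b * (xi `^ s * t `^ (- s))) * xi^-1)%:E * Iint k xi)%E.
  apply: chain (kk_decay hk dk C00 s0 s1 sr xi0 xit) _.
    by rewrite mulr_ge0 ?mulr_ge0 ?powR_ge0.
  by rewrite /kk.
have hz : (Iint f xi <= 1%:E * Iint f xi)%E by rewrite mul1e.
have := prod3 (nni_ge0 hg t) (kk_ge0 hk t0) (Iint_ge0 xi hf) hx hy hz.
move/le_trans; apply.
have -> : (Iint g xi * Iint k xi * Iint f xi = Iint f xi * Iint g xi * Iint k xi)%E.
  by rewrite muleC muleA.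
apply: le_trans (lee_wpmul2l _ (Db xi xi0)) _.
  by rewrite lee_fin !mulr_ge0 ?invr_ge0 ?powR_ge0 // ltW.
rewrite muleA -EFinM; apply: lee_wpmul2r => //; rewrite lee_fin le_eqVlt; apply/orP; left; apply/eqP.
rewrite /gm.
rewrite ?(powRD' _ _ xi0) ?(powRD' _ _ t0) ?powRN ?(powRD' _ _ xi0) ?(powRD' _ _ t0) ?powRN.
rewrite !powRr1 ?(ltW xi0) ?(ltW t0) //.
have := powR_gt0 b xi0; have := powR_gt0 s xi0; have := powR_gt0 b t0; have := powR_gt0 s t0.
have := powR_gt0 a xi0.
move=> h1 h2 h3 h4 h5.
field.
by rewrite !gt_eqF.
Qed.

Lemma case2 f g k C0 al rho a b D xi t :
  nni f -> nni g -> nni k -> decay f C0 al -> decay k C0 rho -> 0 < C0 ->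
  0 <= al -> 0 <= rho -> 0 < a -> a < 1 -> 1 <= rho + al + a -> (0 <= D)%E ->
  (forall r, 0 < r -> (Iint f r * Iint g r * Iint k r <= (r `^ (1 + a + b))%:E * D)%E) ->
  0 < t -> t <= xi ->
  (g t * J f k xi t <= ((1 + C0 * C1 C0 rho a / a) * (xi `^ a * t `^ (b - 1)))%:E * D)%E.
Proof.
move=> hf hg hk df dk C00 al0 r0 a0 a1 hra D0 Db t0 txi.
have xi0 : 0 < xi := lt_le_trans t0 txi.
have [s0 s1 sr gm0 gma] := sig_props r0 a0 a1 al0 hra.
have C10 : 0 <= C1 C0 rho a := C1_ge0 C00 s1.
set s := sig rho a in s0 s1 sr gm0 gma C10 *.
set gm := 1 - a - s in gm0 gma *.
have phi0 : forall u, (0 <= f u * kk k (Num.max u t))%E.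
  by move=> u; rewrite mule_ge0 ?(nni_ge0 hf) ?kk_ge0 ?max_pos.
have HS : J f k xi t = (\int[mu]_(u in `]0%R, t]) (f u * kk k (Num.max u t)) +
    \int[mu]_(u in `]t, xi]) (f u * kk k (Num.max u t)))%E.
  rewrite /J (@itv_bndbnd_setU _ _ (BRight 0) (BRight t) (BRight xi)) ?bnd_simp ?(ltW t0) //.
  apply: ge0_integral_setU => //.
  - exact: phi_meas.
  - rewrite disj_set2E; apply/eqP/seteqP; split => // u [] /=.
    rewrite !in_itv /= => /andP[_ ut] /andP[tu _].
    by move: (lt_le_trans tu ut); rewrite ltxx.
have P1 : (\int[mu]_(u in `]0%R, t]) (f u * kk k (Num.max u t)) = kk k t * Iint f t)%E.
  rewrite /Iint -ge0_integralZl //; last 3 first.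
  - exact: nni_meas.
  - by move=> u _; exact: (nni_ge0 hf).
  - exact: kk_ge0.
  apply: eq_integral => u; rewrite inE /= in_itv /= => /andP[_ ut].
  by rewrite max_r // muleC.
pose d := C0 * C1 C0 rho a * t `^ (1 - a).
have d0 : 0 <= d by rewrite /d !mulr_ge0 ?powR_ge0 // ltW.
pose K := (d%:E * (f t * kk k t))%E.
have K0 : (0 <= K)%E.
  by apply: mule_ge0; [rewrite lee_fin | apply: mule_ge0; [exact: (nni_ge0 hf t) | exact: kk_ge0 hk t0]].
have P2 : (\int[mu]_(u in `]t, xi]) (f u * kk k (Num.max u t)) <= K * (xi `^ a / a)%:E)%E.
  apply: (@le_trans _ _ (\int[mu]_(u in `]t, xi]) (K * (u `^ (a - 1))%:E))%E).
    apply: ge0_le_integral => //.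
    - exact: phi_meas.
    - by apply: measurable_funeM; apply: measurable_funTS; exact: mpow.
    move=> u; rewrite /= in_itv /= => /andP[tu uxi].
    rewrite max_l ?(ltW tu) //.
    apply: le_trans (lee_pmul (nni_ge0 hf u) (kk_ge0 hk (lt_trans t0 tu))
      (decay_pw hf df C00 gm0 gma t0 (ltW tu)) (kk_decay hk dk C00 s0 s1 sr t0 (ltW tu))) _.
    rewrite /K muleACA -EFinM muleAC -EFinM.
    apply: lee_wpmul2r; first by rewrite mule_ge0 ?(nni_ge0 hf) ?kk_ge0.
    rewrite lee_fin le_eqVlt; apply/orP; left; apply/eqP.
    have u0 : 0 < u := lt_trans t0 tu.
    rewrite /d /gm /C1 -/s.
    rewrite ?(powRD' _ _ u0) ?(powRD' _ _ t0) ?powRN ?(powRD' _ _ u0) ?(powRD' _ _ t0) ?powRN.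
    rewrite !powRr1 ?(ltW u0) ?(ltW t0) //.
    have := powR_gt0 a u0; have := powR_gt0 s u0; have := powR_gt0 a t0; have := powR_gt0 s t0.
    move=> h1 h2 h3 h4.
    have h5 : 1 - s != 0 by rewrite subr_eq0 (gt_eqF s1).
    field.
    by rewrite h5 !gt_eqF.
  rewrite ge0_integralZl //; last 2 first.
  - by apply: measurable_funTS; exact: mpow.
  - by move=> u _; rewrite lee_fin powR_ge0.
  apply: lee_wpmul2l => //.
  apply: le_trans (powR_int_0c a0 xi0).
  apply: ge0_subset_integral => //.
  - by apply: measurable_funTS; exact: mpow.
  - by move=> u _; rewrite lee_fin powR_ge0.
  - by move=> u; rewrite /= !in_itv /= => /andP[tu ->]; rewrite (lt_trans t0 tu).
have B1 : (g t * (kk k t * Iint f t) <= (xi `^ a * t `^ (b - 1))%:E * D)%E.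
  rewrite muleA.
  have hx : (g t <= (t^-1)%:E * Iint g t)%E by exact: lowerI' hg t0.
  have hy : (kk k t <= (t^-1)%:E * Iint k t)%E by rewrite /kk.
  have hz : (Iint f t <= 1%:E * Iint f t)%E by rewrite mul1e.
  have := prod3 (nni_ge0 hg t) (kk_ge0 hk t0) (Iint_ge0 t hf) hx hy hz.
  move/le_trans; apply.
  have -> : (Iint g t * Iint k t * Iint f t = Iint f t * Iint g t * Iint k t)%E.
    by rewrite muleC muleA.
  apply: le_trans (lee_wpmul2l _ (Db t t0)) _.
    by rewrite lee_fin !mulr_ge0 ?invr_ge0 ?powR_ge0 // ltW.
  rewrite muleA -EFinM; apply: lee_wpmul2r => //; rewrite lee_fin.
  have -> : t^-1 * t^-1 * 1 * t `^ (1 + a + b) = t `^ a * t `^ (b - 1).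
    rewrite !(powRD' _ _ t0) !powRN powRr1 ?(ltW t0) //.
    have := powR_gt0 a t0; have := powR_gt0 b t0; move=> h1 h2.
    field.
    by rewrite !gt_eqF.
  apply: ler_wpM2r; first exact: powR_ge0.
  apply: (ge0_ler_powR (ltW a0)) => //; rewrite nnegrE; exact: ltW.
have B2 : (g t * (K * (xi `^ a / a)%:E) <= (C0 * C1 C0 rho a / a * (xi `^ a * t `^ (b - 1)))%:E * D)%E.
  have -> : (g t * (K * (xi `^ a / a)%:E) = (d * (xi `^ a / a))%:E * (g t * f t * kk k t))%E.
    rewrite /K muleAC muleCA -EFinM.
    by rewrite !muleA.
  have hx : (g t <= (t^-1)%:E * Iint g t)%E by exact: lowerI' hg t0.
  have hy : (f t <= (t^-1)%:E * Iint f t)%E by exact: lowerI' hf t0.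
  have hz : (kk k t <= (t^-1)%:E * Iint k t)%E by rewrite /kk.
  have := prod3 (nni_ge0 hg t) (nni_ge0 hf t) (kk_ge0 hk t0) hx hy hz.
  move/(lee_wpmul2l (_ : (0 <= (d * (xi `^ a / a))%:E)%E)) => H.
  apply: le_trans (H _) _.
    by rewrite lee_fin mulr_ge0 // divr_ge0 ?powR_ge0 // ltW.
  have -> : (Iint g t * Iint f t * Iint k t = Iint f t * Iint g t * Iint k t)%E.
    by rewrite (muleC (Iint g t)).
  rewrite muleA -EFinM.
  apply: le_trans (lee_wpmul2l _ (Db t t0)) _.
    by rewrite lee_fin !mulr_ge0 ?invr_ge0 ?powR_ge0 ?divr_ge0 // ltW.
  rewrite muleA -EFinM; apply: lee_wpmul2r => //; rewrite lee_fin le_eqVlt; apply/orP; left; apply/eqP.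
  rewrite /d.
  rewrite ?(powRD' _ _ t0) ?powRN ?(powRD' _ _ t0) ?powRN.
  rewrite !powRr1 ?(ltW t0) //.
  have := powR_gt0 a t0; have := powR_gt0 b t0; move=> h1 h2.
  field.
  by rewrite !gt_eqF.
have Jle : (J f k xi t <= kk k t * Iint f t + K * (xi `^ a / a)%:E)%E.
  by rewrite HS P1; apply: leeD.
apply: le_trans (lee_wpmul2l (nni_ge0 hg t) Jle) _.
rewrite ge0_muleDr; last 2 first.
- by rewrite mule_ge0 ?kk_ge0 ?Iint_ge0.
- by rewrite mule_ge0 // lee_fin divr_ge0 ?powR_ge0 // ltW.
apply: le_trans (leeD B1 B2) _.
rewrite -ge0_muleDl; last 2 first.
- by rewrite lee_fin mulr_ge0 ?powR_ge0.
- by rewrite lee_fin !mulr_ge0 ?invr_ge0 ?powR_ge0 ?(ltW C00) ?(ltW a0).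
by rewrite -EFinD mulrDl mul1r.
Qed.

Definition Mc (C0 rho a b : R) := 1 + C0 * C1 C0 rho a / a + C0 * C1 C0 rho b.

Lemma main_abs f g k C0 al be rho a b D xi eta :
  nni f -> nni g -> nni k -> decay f C0 al -> decay g C0 be -> decay k C0 rho -> 0 < C0 ->
  0 <= al -> 0 <= be -> 0 <= rho -> 0 < a -> a < 1 -> 0 < b -> b < 1 ->
  1 <= rho + al + a -> 1 <= rho + be + b -> (0 <= D)%E ->
  (forall r, 0 < r -> (Iint f r * Iint g r * Iint k r <= (r `^ (1 + a + b))%:E * D)%E) ->
  0 < xi -> 0 < eta ->
  (\int[mu]_(t in `]0%R, eta]) (g t * J f k xi t) <=
     (Mc C0 rho a b * (xi `^ a * (eta `^ b / b)))%:E * D)%E.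
Proof.
move=> hf hg hk df dg dk C00 al0 be0 r0 a0 a1 b0 b1 hra hrb D0 Db xi0 eta0.
have [sa0 sa1 _ _ _] := sig_props r0 a0 a1 al0 hra.
have [sb0 sb1 _ _ _] := sig_props r0 b0 b1 be0 hrb.
have Ca : 0 <= C1 C0 rho a := C1_ge0 C00 sa1.
have Cb : 0 <= C1 C0 rho b := C1_ge0 C00 sb1.
have M0 : 0 <= Mc C0 rho a b.
  by rewrite /Mc !addr_ge0 // !mulr_ge0 ?invr_ge0 // ltW.
apply: (@le_trans _ _ (\int[mu]_(t in `]0%R, eta])
    (((Mc C0 rho a b * xi `^ a)%:E * D) * (t `^ (b - 1))%:E))%E).
  apply: ge0_le_integral => //.
  - move=> t; rewrite /= in_itv /= => /andP[t0 _].
    by rewrite mule_ge0 ?(nni_ge0 hg) ?J_ge0.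
  - exact: gJ_meas.
  - by apply: measurable_funeM; apply: measurable_funTS; exact: mpow.
  move=> t; rewrite /= in_itv /= => /andP[t0 _].
  rewrite muleAC -EFinM -mulrA.
  have X0 : 0 <= xi `^ a * t `^ (b - 1) by rewrite mulr_ge0 ?powR_ge0.
  have [xit|txi] := leP xi t.
  - apply: le_trans (case1 hf hg hk dg dk C00 be0 r0 b0 b1 hrb D0 Db xi0 xit) _.
    apply: lee_wpmul2r => //; rewrite lee_fin; apply: ler_wpM2r => //.
    by rewrite /Mc lerDr addr_ge0 // !mulr_ge0 ?invr_ge0 // ltW.
  - apply: le_trans (case2 hf hg hk df dk C00 al0 r0 a0 a1 hra D0 Db t0 (ltW txi)) _.
    apply: lee_wpmul2r => //; rewrite lee_fin; apply: ler_wpM2r => //.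
    by rewrite /Mc lerDl !mulr_ge0 // ltW.
rewrite ge0_integralZl //; last 3 first.
- by apply: measurable_funTS; exact: mpow.
- by move=> u _; rewrite lee_fin powR_ge0.
- by rewrite mule_ge0 // lee_fin mulr_ge0 ?powR_ge0.
rewrite muleAC; apply: lee_wpmul2r => //.
apply: le_trans (lee_wpmul2l _ (powR_int_0c b0 eta0)) _.
  by rewrite lee_fin mulr_ge0 ?powR_ge0.
by rewrite -EFinM mulrA.
Qed.

Lemma rearr_nni n (h : n.-tuple R -> R) : nni (rearr h).
Proof.
split.
- move=> x; apply: le_ereal_inf_tmp => _ [s [s0 _] <-].
  by rewrite lee_fin.
- move=> x y xy; apply: ereal_inf_le_tmp => _ [s [s0 hs] <-].
  exists s => //; split => //; apply: le_trans hs _.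
  by rewrite lee_fin.
Qed.
End S.

Unset Implicit Arguments.

Theorem lemma3 (R : realType) (p q alpha beta rho C0 : R) :
  1 < p -> 1 < q -> 0 <= alpha -> 0 <= beta -> 0 <= rho -> 0 < C0 ->
  rho + alpha + p^-1 >= 1 -> rho + beta + (conj_exp q)^-1 >= 1 ->
  exists C : R,
  forall (n : nat) (mu nu K : n.-tuple R -> R),
    (0 < n)%N ->
    locally_integrable_n mu -> locally_integrable_n nu -> locally_integrable_n K ->
    (forall lam t : R, 1 <= lam -> 0 < t ->
       (rearr mu (lam * t) <= (C0 / lam `^ alpha)%:E * rearr mu t)%E) ->
    (forall lam t : R, 1 <= lam -> 0 < t ->
       (rearr nu (lam * t) <= (C0 / lam `^ beta)%:E * rearr nu t)%E) ->
    (forall lam t : R, 1 <= lam -> 0 < t ->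
       (rearr K (lam * t) <= (C0 / lam `^ rho)%:E * rearr K t)%E) ->
    let D := ereal_sup [set (((t `^ (2 + p^-1 - q^-1))^-1)%:E *
                 (rearr_int mu t * rearr_int nu t * rearr_int K t))%E
               | t in [set t : R | 0 < t]] in
    (D < +oo)%E ->
    forall xi eta : R, 0 < xi -> 0 < eta ->
      (((eta `^ (conj_exp q)^-1)^-1 * (xi `^ p^-1)^-1)%:E *
        \int[lebesgue_measure]_(t in `]0%R, eta])
          (rearr nu t *
            \int[lebesgue_measure]_(s in `]0%R, xi])
              (rearr mu s * rearr2 K (Num.max s t)))
       <= C%:E * D)%E.
Proof.
move=> p1 q1 al0 be0 r0 C00 hra hrb.
have p0 : 0 < p by apply: lt_trans p1.
have q0 : 0 < q by apply: lt_trans q1.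
have a0 : 0 < p^-1 by rewrite invr_gt0.
have a1 : p^-1 < 1 by rewrite invf_lt1.
have bE : (conj_exp q)^-1 = 1 - q^-1.
  by rewrite /conj_exp invf_div; field; rewrite gt_eqF.
have b0 : 0 < (conj_exp q)^-1.
  by rewrite bE subr_gt0 invf_lt1.
have b1 : (conj_exp q)^-1 < 1 by rewrite bE ltrBlDr ltrDl invr_gt0.
set a := p^-1 in a0 a1 hra *.
set b := (conj_exp q)^-1 in bE b0 b1 hrb *.
exists (Mc C0 rho a b / b).
move=> n mu nu K _ _ _ _ dmu dnu dK D HD xi eta xi0 eta0.
have hf := rearr_nni mu; have hg := rearr_nni nu; have hk := rearr_nni K.
have E : 2 + a - q^-1 = 1 + a + b by rewrite bE; ring.
have elt : forall r, 0 < r -> ((((r `^ (2 + a - q^-1))^-1)%:E *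
    (rearr_int mu r * rearr_int nu r * rearr_int K r)) <= D)%E.
  move=> r r0'; apply: ereal_sup_ubound; exists r => //.
have D0 : (0 <= D)%E.
  apply: le_trans (elt 1 ltr01).
  apply: mule_ge0; first by rewrite lee_fin invr_ge0 powR_ge0.
  by apply: mule_ge0; [apply: mule_ge0|]; exact: Iint_ge0.
have Db : forall r, 0 < r -> (Iint (rearr mu) r * Iint (rearr nu) r * Iint (rearr K) r <=
    (r `^ (1 + a + b))%:E * D)%E.
  move=> r r0'; have := elt r r0'; rewrite E => H.
  have rp : 0 < r `^ (1 + a + b) by rewrite powR_gt0.
  apply: (@le_trans _ _ ((r `^ (1 + a + b))%:E * (((r `^ (1 + a + b))^-1)%:E *
     (rearr_int mu r * rearr_int nu r * rearr_int K r)))%E).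
    by rewrite muleA -EFinM mulfV ?gt_eqF // mul1e.
  by apply: lee_wpmul2l => //; rewrite lee_fin ltW.
have H := main_abs hf hg hk dmu dnu dK C00 al0 be0 r0 a0 a1 b0 b1 hra hrb D0 Db xi0 eta0.
apply: le_trans (lee_wpmul2l _ H) _.
  by rewrite lee_fin mulr_ge0 // invr_ge0 powR_ge0.
rewrite muleA -EFinM; apply: lee_wpmul2r => //; rewrite lee_fin le_eqVlt; apply/orP; left; apply/eqP.
have := powR_gt0 a xi0; have := powR_gt0 b eta0; move=> h1 h2.
field.
by rewrite !gt_eqF.
Qed.
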